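(* Let $m$ and $n$ be odd positive integers with $\gcd(m,n)=1$. Then at least one of the sets $\{G_{m,t}: t\ge1\}$ and $\{G_{n,t}:t\ge1\}$ contains only finitely many boards of outcome class $V$.
   Context: Domineering is a two-player game played on a rectangular grid of unit squares. The players alternate placing dominoes, each covering two adjacent unoccupied squares; the player Vertical must place dominoes vertically (covering two squares in the same column), and the player Horizontal must place them horizontally (covering two squares in the same row). A player with no legal move on her turn loses. $G_{m,n}$ denotes the empty board with vertical dimension $m$ (number of rows) and horizontal dimension $n$ (number of columns). Every position has one of four outcome classes under optimal play: $V$ (Vertical wins whoever moves first), $H$ (Horizontal wins whoever moves first), $1$ (the player who moves first wins), $2$ (the player who moves second wins). *)

(* Defs.v *)
From mathcomp Require Import all_boot.
Set Implicit Arguments. Unset Strict Implicit. Unset Printing Implicit Defensive.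

(* Domineering on an m x n board (m rows, n columns). *)
Inductive player := Vert | Horz.
Definition other (p : player) : player :=
  match p with Vert => Horz | Horz => Vert end.

Inductive outcome_class := OV | OH | O1 | O2.

Section Board.
Variables m n : nat.
(* a cell is (row, column) *)
Definition cell := ('I_m * 'I_n)%type.

Definition domino (p : player) (c d : cell) : bool :=
  match p with
  | Vert => (c.2 == d.2) && (nat_of_ord d.1 == (nat_of_ord c.1).+1)
  | Horz => (c.1 == d.1) && (nat_of_ord d.2 == (nat_of_ord c.2).+1)
  end.

(* wins_fuel k p F : player p, to move on the position whose free cells are F,
   has a winning strategy (normal play). Correct whenever k >= #|F|, since each
   move removes two cells. *)
Fixpoint wins_fuel (k : nat) (p : player) (F : {set cell}) : bool :=
  if k is k'.+1 then
    [exists c : cell, exists d : cell,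
      [&& domino p c d, c \in F, d \in F &
          ~~ wins_fuel k' (other p) (F :\ c :\ d)]]
  else false.

Definition wins (p : player) (F : {set cell}) : bool := wins_fuel #|F| p F.

Definition outcome : outcome_class :=
  let F := [set: cell] in
  match wins Vert F, wins Horz F with
  | true, false => OV
  | false, true => OH
  | true, true => O1    (* first player wins *)
  | false, false => O2  (* second player wins *)
  end.
End Board.

(* Main.v *)
Require Import Defs.
From mathcomp Require Import all_boot zify.
From Stdlib Require Import Classical.
Set Implicit Arguments. Unset Strict Implicit. Unset Printing Implicit Defensive.

Lemma domino_neq m n p (c d : cell m n) : domino p c d -> c != d.
Proof.
case: p => /andP [_ /eqP H]; apply/negP => /eqP E; subst d; move: H.
- by case: c => i j /= /eqP; rewrite -[X in X == _]addn0 -addn1 eqn_add2l.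
- by case: c => i j /= /eqP; rewrite -[X in X == _]addn0 -addn1 eqn_add2l.
Qed.

Lemma card_rm2 m n p (c d : cell m n) (F : {set cell m n}) :
  domino p c d -> c \in F -> d \in F -> (#|F :\ c :\ d|).+2 = #|F|.
Proof.
move=> hd hc hdF.
rewrite [RHS](cardsD1 c) hc [#|F :\ c|](cardsD1 d) in_setD1 hdF.
by rewrite eq_sym (domino_neq hd).
Qed.

Lemma fuel_eq m n k1 k2 p (F : {set cell m n}) :
  #|F| <= k1 -> #|F| <= k2 -> wins_fuel k1 p F = wins_fuel k2 p F.
Proof.
elim: k1 k2 p F => [|k1 IH] [|k2] p F h1 h2 //=.
- have -> : F = set0 by apply/eqP; rewrite -cards_eq0 -leqn0.
  by symmetry; apply/existsP => [[c /existsP [d /and4P [_]]]]; rewrite inE.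
- have -> : F = set0 by apply/eqP; rewrite -cards_eq0 -leqn0.
  by apply/existsP => [[c /existsP [d /and4P [_]]]]; rewrite inE.
- apply: eq_existsb => c; apply: eq_existsb => d.
  case hd: (domino p c d) => //=; case hc: (c \in F) => //=.
  case hdF: (d \in F) => //=.
  have := card_rm2 hd hc hdF => e.
  by rewrite (IH k2) // -ltnS -ltnS e ltnW.
Qed.

Lemma winsE m n p (F : {set cell m n}) :
  wins p F = [exists c, exists d, [&& domino p c d, c \in F, d \in F &
                 ~~ wins (other p) (F :\ c :\ d)]].
Proof.
rewrite /wins; case e: #|F| => [|k] /=.
- have -> : F = set0 by apply/eqP; rewrite -cards_eq0 e.
  by symmetry; apply/existsP => [[c /existsP [d /and4P [_]]]]; rewrite inE.
- apply: eq_existsb => c; apply: eq_existsb => d.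
  case hd: (domino p c d) => //=; case hc: (c \in F) => //=.
  case hdF: (d \in F) => //=.
  have := card_rm2 hd hc hdF; rewrite e => -[e'].
  by rewrite (@fuel_eq _ _ k #|F :\ c :\ d|) // -e' leqnSn.
Qed.

Lemma imD2 (T1 T2 : finType) (f : T1 -> T2) (F : {set T1}) c d :
  injective f -> f @: (F :\ c :\ d) = f @: F :\ f c :\ f d.
Proof.
move=> fi; apply/setP => y; rewrite !in_setD1; apply/imsetP/idP.
- move=> [x]; rewrite !in_setD1 => /and3P [xd xc xF] ->.
  by rewrite (inj_eq fi) xd (inj_eq fi) xc imset_f.
- move=> /and3P [yd yc /imsetP [x xF ey]]; exists x => //.
  by rewrite !in_setD1 xF -(inj_eq fi) -ey yd -(inj_eq fi) -ey yc.
Qed.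

Lemma wins_map m1 n1 m2 n2 (f : cell m1 n1 -> cell m2 n2) (q : player -> player) :
  injective f -> (forall p, q (other p) = other (q p)) ->
  (forall p c d, domino (q p) (f c) (f d) = domino p c d) ->
  forall p (F : {set cell m1 n1}), wins (q p) (f @: F) = wins p F.
Proof.
move=> fi qo fd.
suff key: forall N p (F : {set cell m1 n1}), #|F| < N -> wins (q p) (f @: F) = wins p F.
  by move=> p F; apply: (key #|F|.+1).
elim=> [|N IH] p F hN //.
rewrite !winsE; apply/existsP/existsP.
- move=> [c' /existsP [d' /and4P [hd hc hd2 hw]]].
  case/imsetP: hc => c hc ec; case/imsetP: hd2 => d hd' ed; subst c' d'.
  exists c; apply/existsP; exists d.
  have hd1 : domino p c d by rewrite -fd.
  apply/and4P; split => //.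
  rewrite -(IH (other p)); first by rewrite imD2 // qo.
  by move: hN; rewrite -(card_rm2 hd1 hc hd') ltnS => /ltnW.
- move=> [c /existsP [d /and4P [hd hc hd' hw]]].
  exists (f c); apply/existsP; exists (f d).
  rewrite fd hd !imset_f //= -imD2 // -qo IH //.
  by move: hN; rewrite -(card_rm2 hd hc hd') ltnS => /ltnW.
Qed.

Lemma rmI (T : finType) (F A : {set T}) x : (F :\ x) :&: A = (F :&: A) :\ x.
Proof. by apply/setP => y; rewrite !inE andbA. Qed.

Lemma rmC (T : finType) (F A : {set T}) x : x \in A -> (F :\ x) :&: ~: A = F :&: ~: A.
Proof.
move=> xA; apply/setP => y; rewrite !inE.
case: eqP => [->|_]; by rewrite ?xA ?andbF.
Qed.

Lemma winsN m n p (F : {set cell m n}) c d :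
  ~~ wins p F -> domino p c d -> c \in F -> d \in F -> wins (other p) (F :\ c :\ d).
Proof.
rewrite winsE negb_exists => /forallP /(_ c); rewrite negb_exists => /forallP /(_ d).
by move=> h hd hc hdF; move: h; rewrite hd hc hdF /= negbK.
Qed.

Lemma winsI m n p (F : {set cell m n}) c d :
  domino p c d -> c \in F -> d \in F -> ~~ wins (other p) (F :\ c :\ d) -> wins p F.
Proof.
move=> hd hc hdF hw; rewrite winsE; apply/existsP; exists c; apply/existsP; exists d.
by rewrite hd hc hdF hw.
Qed.

Lemma winsP m n p (F : {set cell m n}) :
  wins p F -> exists c d, [/\ domino p c d, c \in F, d \in F & ~~ wins (other p) (F :\ c :\ d)].
Proof.
rewrite winsE => /existsP [c /existsP [d /and4P [hd hc hdF hw]]]; by exists c, d.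
Qed.

Lemma sum2 m n p :
  forall (A : {set cell m n}),
  (forall c d, domino (other p) c d -> (c \in A) = (d \in A)) ->
  forall F : {set cell m n}, ~~ wins (other p) (F :&: A) -> ~~ wins (other p) (F :&: ~: A) ->
  ~~ wins (other p) F.
Proof.
suff: forall N (A : {set cell m n}),
  (forall c d, domino (other p) c d -> (c \in A) = (d \in A)) ->
  forall F : {set cell m n}, #|F| < N -> ~~ wins (other p) (F :&: A) -> ~~ wins (other p) (F :&: ~: A) ->
  ~~ wins (other p) F.
  by move=> H A hA F; apply: (H #|F|.+1).
elim=> [|N IH] A hA F hN h1 h2 //.
have ep : other (other p) = p by case: p {hA IH h1 h2}.
apply/negP => /winsP [c [d [hd hc hdF hw]]]; rewrite ep in hw; move/negP: hw; apply.
wlog hcA : A hA h1 h2 / c \in A.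
  move=> W; case: (boolP (c \in A)) => cA; first by apply: (W A).
  apply: (W (~: A)); rewrite ?setCK ?inE //.
  by move=> c' d' /hA; rewrite !inE => ->.
have hdA : d \in A by rewrite -(hA _ _ hd).
have : wins p ((F :&: A) :\ c :\ d).
  by have := winsN h1 hd; rewrite !inE hc hcA hdF hdA ep; apply.
case/winsP => e [g [he heF hgF hw]].
have heA : e \in A by move: heF; rewrite !inE => /and3P [_ _ /andP []].
have hgA : g \in A by move: hgF; rewrite !inE => /and3P [_ _ /andP []].
apply: (winsI he).
- by move: heF; rewrite !inE => /and3P [-> -> /andP []].
- by move: hgF; rewrite !inE => /and3P [-> -> /andP []].
- apply: (IH A hA).
  + have hd2 := card_rm2 hd hc hdF.
    have he2 : e \in F :\ c :\ d by move: heF; rewrite !inE => /and3P [-> -> /andP []].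
    have hg2 : g \in F :\ c :\ d by move: hgF; rewrite !inE => /and3P [-> -> /andP []].
    have := card_rm2 he he2 hg2; move: hN; rewrite -hd2 => hN he3.
    by move: hN; rewrite -he3 ltnS => /ltnW /ltnW /ltnW.
  + by rewrite !rmI.
  + by rewrite !rmC.
Qed.

Lemma sum1 m n p (A F : {set cell m n}) :
  (forall c d, domino (other p) c d -> (c \in A) = (d \in A)) ->
  wins p (F :&: A) -> ~~ wins (other p) (F :&: ~: A) -> wins p F.
Proof.
move=> hA /winsP [c [d [hd hc hdF hw]]].
move: hc hdF; rewrite !inE => /andP [hc hcA] /andP [hdF hdA] h2.
apply: (winsI hd hc hdF); apply: (sum2 hA).
- by rewrite !rmI.
- by rewrite !rmC.
Qed.

Lemma cell_eq m n (x y : cell m n) :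
  nat_of_ord x.1 = nat_of_ord y.1 -> nat_of_ord x.2 = nat_of_ord y.2 -> x = y.
Proof. by case: x y => [a b] [c d] /= /val_inj -> /val_inj ->. Qed.

Lemma dominoV m n (c d : cell m n) :
  domino Vert c d = (nat_of_ord c.2 == d.2) && (nat_of_ord d.1 == (nat_of_ord c.1).+1).
Proof. by []. Qed.

Lemma dominoH m n (c d : cell m n) :
  domino Horz c d = (nat_of_ord c.1 == d.1) && (nat_of_ord d.2 == (nat_of_ord c.2).+1).
Proof. by []. Qed.

Section Sig.
Variables m w : nat.
Local Notation N := (w + m + m).

Definition sig (x : cell m N) : cell m N :=
  let i := nat_of_ord x.1 in let j := nat_of_ord x.2 in
  if w <= j then
    if j < w + m then (insubd x.1 (j - w), insubd x.2 (w + m + i))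
    else (insubd x.1 (j - w - m), insubd x.2 (w + i))
  else x.

Lemma sig_lo (x : cell m N) : w <= x.2 -> x.2 < w + m ->
  nat_of_ord (sig x).1 = x.2 - w /\ nat_of_ord (sig x).2 = w + m + x.1.
Proof.
move=> h1 h2; rewrite /sig h1 h2 /= !val_insubd.
have := ltn_ord x.1; have := ltn_ord x.2.
case: ifP => [_|]; last by lia.
case: ifP => [_|]; last by lia.
by [].
Qed.

Lemma sig_hi (x : cell m N) : w + m <= x.2 ->
  nat_of_ord (sig x).1 = x.2 - w - m /\ nat_of_ord (sig x).2 = w + x.1.
Proof.
move=> h2; have h1 : w <= x.2 by lia.
have h3 : (x.2 < w + m) = false by lia.
rewrite /sig h1 h3 /= !val_insubd.
have := ltn_ord x.1; have := ltn_ord x.2.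
case: ifP => [_|]; last by lia.
case: ifP => [_|]; last by lia.
by [].
Qed.

Lemma sig_reg (x : cell m N) : w <= x.2 -> w <= (sig x).2.
Proof.
move=> h; case: (ltnP x.2 (w + m)) => h2.
- by have [_ ->] := sig_lo h h2; lia.
- by have [_ ->] := sig_hi h2; lia.
Qed.

Lemma sig_half (x : cell m N) : w <= x.2 -> (x.2 < w + m) = ~~ ((sig x).2 < w + m).
Proof.
move=> h; case: (ltnP x.2 (w + m)) => h2.
- by have [_ ->] := sig_lo h h2; lia.
- by have [_ ->] := sig_hi h2; have := ltn_ord x.1; lia.
Qed.

Lemma sigK (x : cell m N) : w <= x.2 -> sig (sig x) = x.
Proof.
move=> h; have := ltn_ord x.1; have := ltn_ord x.2 => hx2 hx1.
case: (ltnP x.2 (w + m)) => h2.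
- have [e1 e2] := sig_lo h h2.
  have h3 : w + m <= (sig x).2 by lia.
  have [f1 f2] := sig_hi h3.
  by apply: cell_eq; rewrite ?f1 ?f2 ?e1 ?e2; lia.
- have [e1 e2] := sig_hi h2.
  have h3 : w <= (sig x).2 by lia.
  have h4 : (sig x).2 < w + m by lia.
  have [f1 f2] := sig_lo h3 h4.
  by apply: cell_eq; rewrite ?f1 ?f2 ?e1 ?e2; lia.
Qed.

Lemma sig_dom (c d : cell m N) : w <= c.2 -> domino Vert c d -> domino Horz (sig c) (sig d).
Proof.
move=> h; rewrite dominoV dominoH => /andP [/eqP e /eqP e'].
have hd : w <= d.2 by lia.
case: (ltnP c.2 (w + m)) => h2.
- have h2' : d.2 < w + m by lia.
  have [a1 a2] := sig_lo h h2; have [b1 b2] := sig_lo hd h2'.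
  rewrite a1 a2 b1 b2; apply/andP; split; apply/eqP; lia.
- have h2' : w + m <= d.2 by lia.
  have [a1 a2] := sig_hi h2; have [b1 b2] := sig_hi h2'.
  rewrite a1 a2 b1 b2; apply/andP; split; apply/eqP; lia.
Qed.

Lemma sig_ne (c d : cell m N) : w <= c.2 -> nat_of_ord c.2 = d.2 -> sig c != d.
Proof.
move=> h e.
apply/negP => /eqP E.
have := sig_half h; rewrite E -e; by case: (_ < _).
Qed.


Lemma copycat : forall K (F E : {set cell m N}), #|F :|: E| < K ->
  (forall x : cell m N, x \in F -> x.2 < w) -> (forall x : cell m N, x \in E -> w <= x.2) ->
  (forall x : cell m N, w <= x.2 -> (sig x \in E) = (x \in E)) ->
  (wins Vert (F :|: E) -> wins Vert F) /\ (~~ wins Horz (F :|: E) -> ~~ wins Horz F).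
Proof.
elim=> [|K IH] F E hK hF hE hS //.
split.
- case/winsP => c [d [hd hc hdF hw]].
  move: (hd); rewrite dominoV => /andP [/eqP e1 /eqP e2].
  have hK' := card_rm2 hd hc hdF.
  move: hc hdF; rewrite !inE.
  case: (boolP (c \in F)) => cF /=.
  + move=> _ hdd.
    have dF : d \in F.
      have cw := hF _ cF.
      case/orP: hdd => // dE; have := hE _ dE; lia.
    have cE : c \notin E by apply/negP => /hE; have := hF _ cF; lia.
    have dE : d \notin E by apply/negP => /hE; have := hF _ cF; lia.
    apply: (winsI hd cF dF).
    have eq1 : (F :|: E) :\ c :\ d = (F :\ c :\ d) :|: E.
      apply/setP => x; rewrite !inE; case: (x =P d) => [->|]; rewrite ?(negbTE dE) ?andbF //.
      by case: (x =P c) => [->|]; rewrite ?(negbTE cE) ?andbF.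
    rewrite eq1 in hw.
    apply: (proj2 (IH (F :\ c :\ d) E _ _ hE hS) hw).
      by move: hK; rewrite -hK' eq1; lia.
    by move=> x; rewrite !inE => /andP [_ /andP [_ /hF]].
  + move=> cE hdd.
    have cw := hE _ cE.
    have dF : d \notin F by apply/negP => /hF; lia.
    have dE : d \in E by move: hdd; rewrite (negbTE dF).
    have eq1 : (F :|: E) :\ c :\ d = F :|: (E :\ c :\ d).
      apply/setP => x; rewrite !inE; case: (x =P d) => [->|]; rewrite ?(negbTE dF) ?andbF //.
      by move=> _; case: (x =P c) => [->|_] /=; rewrite ?(negbTE cF).
    rewrite eq1 in hw.
    have hsd := sig_dom cw hd.
    have sc : sig c \in F :|: E :\ c :\ d.
      by rewrite !inE hS // cE (sig_ne cw e1) (sig_ne cw (erefl _)) orbT.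
    have dw : w <= d.2 by lia.
    have sd : sig d \in F :|: E :\ c :\ d.
      by rewrite !inE hS // dE sig_ne // (sig_ne dw (esym e1)) orbT.
    have := winsN hw hsd sc sd => /= hw2.
    set E2 := E :\ c :\ d :\ sig c :\ sig d.
    have eq2 : (F :|: E :\ c :\ d) :\ sig c :\ sig d = F :|: E2.
      apply/setP => x; rewrite !inE.
      case: (boolP (x \in F)) => xF; last by [].
      have xw := hF _ xF.
      have ne : forall y : cell m N, w <= nat_of_ord y.2 -> (x == y) = false.
        by move=> y hy; apply/eqP => exy; move: hy; rewrite -exy; lia.
      by rewrite (ne _ cw) (ne _ dw) (ne _ (sig_reg cw)) (ne _ (sig_reg dw)).
    rewrite eq2 in hw2.
    apply: (proj1 (IH F E2 _ hF _ _) hw2).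
    * have c2 : sig c \in F :|: E :\ c :\ d by [].
      have := card_rm2 hsd sc sd; rewrite eq2 => e3.
      by move: hK; rewrite -hK' eq1 -e3; lia.
    * by move=> x; rewrite !inE => /andP [_ /andP [_ /andP [_ /andP [_ /hE]]]].
    * move=> x hx; rewrite !inE hS //.
      have ex : forall y : cell m N, w <= nat_of_ord y.2 -> (sig x == y) = (x == sig y).
        move=> y hy; apply/eqP/eqP => [<-|->]; by rewrite sigK.
      rewrite (ex _ cw) (ex _ dw) (ex _ (sig_reg cw)) (ex _ (sig_reg dw)) !sigK //.
      by case: (x != d); case: (x != c); case: (x != sig d); case: (x != sig c).
- apply: contra => /winsP [c [d [hd hc hdF hw]]].
  apply/negP => /negP hnw.
  have hc' : c \in F :|: E by rewrite inE hc.
  have hd' : d \in F :|: E by rewrite inE hdF.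
  have := winsN hnw hd hc' hd' => /= hw2.
  have cE : c \notin E by apply/negP => /hE; have := hF _ hc; lia.
  have dE : d \notin E by apply/negP => /hE; have := hF _ hdF; lia.
  have eq1 : (F :|: E) :\ c :\ d = (F :\ c :\ d) :|: E.
    apply/setP => x; rewrite !inE; case: (x =P d) => [->|]; rewrite ?(negbTE dE) ?andbF //.
    by case: (x =P c) => [->|]; rewrite ?(negbTE cE) ?andbF.
  rewrite eq1 in hw2.
  move/negP: hw; apply; apply: (proj1 (IH _ _ _ _ hE hS) hw2).
  + have := card_rm2 hd hc' hd'; rewrite eq1 => e3.
    by move: hK; rewrite -e3; lia.
  + by move=> x; rewrite !inE => /andP [_ /andP [_ /hF]].
Qed.

End Sig.

Definition Vb m n := wins Vert [set: cell m n] && ~~ wins Horz [set: cell m n].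

Lemma imset_char (T1 T2 : finType) (f : T1 -> T2) (P : pred T2) :
  (forall x, P (f x)) -> (forall y, P y -> exists x, y = f x) ->
  f @: [set: T1] = [set y | P y].
Proof.
move=> h1 h2; apply/setP => y; rewrite inE; apply/imsetP/idP.
- by move=> [x _ ->].
- by move=> /h2 [x ->]; exists x.
Qed.

Lemma transpose m n p : wins p [set: cell m n] = wins (other p) [set: cell n m].
Proof.
pose f := fun x : cell m n => (x.2, x.1) : cell n m.
have fi : injective f by move=> [a b] [c d] [-> ->].
have := @wins_map m n n m f other fi (fun p => erefl) _ p [set: cell m n].
have -> : f @: [set: cell m n] = [set: cell n m].
  have hc : forall y : cell n m, predT y -> exists x, y = f x.
    by move=> [a b] _; exists (b, a).
  by rewrite (@imset_char _ _ f predT (fun _ => isT) hc); apply/setP => x; rewrite !inE.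
move=> ->; first by [].
by move=> q c d; case: q.
Qed.

Lemma down1 m w : Vb m (w + m + m) -> Vb m w.
Proof.
pose F := [set x : cell m (w + m + m) | x.2 < w].
pose E := [set x : cell m (w + m + m) | w <= x.2].
have a1 : forall x : cell m (w + m + m), x \in F -> x.2 < w by move=> x; rewrite inE.
have a2 : forall x : cell m (w + m + m), x \in E -> w <= x.2 by move=> x; rewrite inE.
have a3 : forall x : cell m (w + m + m), w <= x.2 -> (sig x \in E) = (x \in E) by move=> x hx; rewrite !inE hx sig_reg.
have [h1 h2] := @copycat m w #|F :|: E|.+1 F E (ltnSn _) a1 a2 a3.
have eT : F :|: E = [set: cell m (w + m + m)].
  by apply/setP => x; rewrite !inE; case: ltnP.
have hw : w <= w + m + m by rewrite -addnA leq_addr.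
pose f := fun x : cell m w => (x.1, widen_ord hw x.2) : cell m (w + m + m).
have fi : injective f.
  move=> [a b] [c d] [-> e]; congr pair; apply: val_inj.
  exact: e.
have fd : forall p c d, domino ((fun q => q) p) (f c) (f d) = domino p c d.
  by move=> [] c d.
have eF : f @: [set: cell m w] = F.
  have hc : forall y : cell m (w + m + m), y.2 < w -> exists x, y = f x.
    by move=> [a b] /= hb; exists (a, Ordinal hb); congr pair; apply: val_inj.
  by rewrite (@imset_char _ _ f (fun x => x.2 < w) (fun x => ltn_ord x.2) hc).
have hV := @wins_map _ _ _ _ f id fi (fun p => erefl) fd.
rewrite /Vb -eT => /andP [v1 v2].
by rewrite /Vb -(hV Vert) -(hV Horz) eF h1 ?h2.
Qed.

Lemma down m w k : Vb m (w + k * (m + m)) -> Vb m w.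
Proof.
elim: k => [|k IH]; first by rewrite mul0n addn0.
have -> : w + k.+1 * (m + m) = w + k * (m + m) + m + m by rewrite mulSn; lia.
by move/down1.
Qed.

Lemma stack a b W : Vb a W -> Vb b W -> Vb (a + b) W.
Proof.
pose A := [set x : cell (a + b) W | x.1 < a].
have hA : forall c d, domino (other Vert) c d -> (c \in A) = (d \in A).
  by move=> c d /andP [/eqP e _]; rewrite !inE e.
pose ft := fun x : cell a W => (lshift b x.1, x.2) : cell (a + b) W.
pose fb := fun x : cell b W => (rshift a x.1, x.2) : cell (a + b) W.
have fti : injective ft.
  move=> [x1 x2] [y1 y2] [e ->]; congr pair; apply: val_inj; exact: e.
have fbi : injective fb.
  move=> [x1 x2] [y1 y2] [e ->]; congr pair; apply: val_inj; move: e => /=; lia.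
have ftd : forall p c d, domino (id p) (ft c) (ft d) = domino p c d.
  by move=> [] c d.
have fbd : forall p c d, domino (id p) (fb c) (fb d) = domino p c d.
  move=> [] [c1 c2] [d1 d2] /=; rewrite /domino /=.
  - by rewrite -addnS eqn_add2l.
  - have -> : (rshift a c1 == rshift a d1) = (c1 == d1).
      by apply/eqP/eqP => [/(congr1 val) /= /addnI e|->] //; apply: val_inj.
    by [].
have eA : ft @: [set: cell a W] = A.
  have hc : forall y : cell (a + b) W, y.1 < a -> exists x, y = ft x.
    by move=> [y1 y2] /= hy; exists (Ordinal hy, y2); congr pair; apply: val_inj.
  by rewrite (@imset_char _ _ ft (fun y => y.1 < a) (fun x => ltn_ord x.1) hc).
have eB : fb @: [set: cell b W] = ~: A.
  have hc : forall y : cell (a + b) W, ~~ (y.1 < a) -> exists x, y = fb x.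
    move=> [y1 y2] /= hy.
    have hy' : y1 - a < b by have := ltn_ord y1; lia.
    by exists (Ordinal hy', y2); congr pair; apply: val_inj => /=; lia.
  have h1 : forall x : cell b W, ~~ ((fb x).1 < a) by move=> x /=; lia.
  rewrite (@imset_char _ _ fb (fun y => ~~ (y.1 < a)) h1 hc).
  by apply/setP => y; rewrite !inE.
have hT := @wins_map _ _ _ _ ft id fti (fun p => erefl) ftd.
have hB := @wins_map _ _ _ _ fb id fbi (fun p => erefl) fbd.
rewrite /Vb => /andP [v1 v2] /andP [w1 w2].
apply/andP; split.
- apply: (@sum1 _ _ Vert A); first exact: hA.
  + by rewrite setTI -eA hT.
  + by rewrite setTI -eB (hB Horz).
- apply: (@sum2 _ _ Vert A); first exact: hA.
  + by rewrite setTI -eA (hT Horz).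
  + by rewrite setTI -eB (hB Horz).
Qed.

Lemma stackk m W k : Vb m W -> 0 < k -> Vb (k * m) W.
Proof.
move=> h; elim: k => [|k IH] // _.
case: k IH => [|k] IH; first by rewrite mul1n.
by rewrite mulSn; apply: stack => //; apply: IH.
Qed.

Lemma contra_sq m n s t : Vb m t -> Vb n s -> m %| s -> n %| t -> 0 < s -> 0 < t -> False.
Proof.
move=> hm hn ds dt s0 t0.
have i0 : 0 < s %/ m by rewrite divn_gt0 ?(dvdn_leq s0 ds) //; case: m {hm} ds => //; rewrite dvd0n; lia.
have j0 : 0 < t %/ n by rewrite divn_gt0 ?(dvdn_leq t0 dt) //; case: n {hn} dt => //; rewrite dvd0n; lia.
have := stackk hm i0; rewrite divnK // => /andP [a _].
have := stackk hn j0; rewrite divnK // => /andP [_ b].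
by move: b; rewrite (transpose _ _ Horz) /= a.
Qed.

Lemma reduce m n t : odd n -> coprime m n -> 0 < m -> 0 < n ->
  4 * m * n <= t -> Vb m t -> exists t0, [/\ 0 < t0, n %| t0 & Vb m t0].
Proof.
move=> on co m0 n0 ht hv.
pose M := m + m.
have coM : coprime M n by rewrite /M addnn -mul2n coprimeMl coprime2n on co.
pose c := chinese M n (t %% M) 0.
pose t0 := c %% (M * n) + M * n.
have Mn0 : 0 < M * n by rewrite muln_gt0 n0 andbT /M; lia.
have e1 : t0 %% M = t %% M.
  rewrite /t0 addnC [M * n]mulnC modnMDl (modn_dvdm _ (dvdn_mull _ (dvdnn M))).
  by rewrite /c chinese_modl // modn_mod.
have e2 : t0 %% n = 0.
  rewrite /t0 addnC modnMDl (modn_dvdm _ (dvdn_mull _ (dvdnn n))).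
  by rewrite /c chinese_modr // mod0n.
have lt : t0 <= t.
  have := ltn_pmod c Mn0; rewrite /t0; move: ht; rewrite /M; lia.
exists t0; split.
- by rewrite /t0; lia.
- by rewrite /dvdn e2.
- have dv : M %| t - t0 by rewrite -eqn_mod_dvd // e1.
  apply: (@down m t0 ((t - t0) %/ M)).
  by rewrite -/M divnK // subnKC.
Qed.

Lemma inf_of (P : nat -> Prop) :
  ~ (exists B, forall t, 1 <= t -> P t -> t < B) -> forall B, exists t, [/\ 1 <= t, P t & B <= t].
Proof.
move=> h B; apply: NNPP => h2; apply: h; exists B => t t1 pt.
rewrite ltnNge; apply/negP => bt; apply: h2; by exists t.
Qed.

Lemma outV m t : outcome m t = OV -> Vb m t.
Proof.
rewrite /outcome /Vb.
by case: (wins Vert _); case: (wins Horz _).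
Qed.

Theorem proposition3p6 (m n : nat) :
  odd m -> odd n -> 0 < m -> 0 < n -> coprime m n ->
  (exists B : nat, forall t : nat, 1 <= t -> outcome m t = OV -> t < B) \/
  (exists B : nat, forall t : nat, 1 <= t -> outcome n t = OV -> t < B).
Proof.
move=> om on m0 n0 co.
case: (classic (exists B : nat, forall t : nat, 1 <= t -> outcome m t = OV -> t < B)) => hm; first by left.
case: (classic (exists B : nat, forall t : nat, 1 <= t -> outcome n t = OV -> t < B)) => hn; first by right.
exfalso.
have [t [_ /outV vt bt]] := inf_of hm (4 * m * n).
have [s [_ /outV vs bs]] := inf_of hn (4 * n * m).
have [t0 [t00 dt vt0]] := reduce on co m0 n0 bt vt.
have co2 : coprime n m by rewrite coprime_sym.
have [s0 [s00 ds vs0]] := reduce om co2 n0 m0 bs vs.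
exact: (contra_sq vt0 vs0 ds dt s00 t00).
Qed.
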